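(* Let $G=(V,E)$ be a finite simple graph and let $s\in[0,1]^{V}$. Then there exists a fort $F$ of $G$ with $\sum_{v\in F}s_v<1$ if and only if every optimal solution $x$ of the integer program $$\text{minimize }\sum_{v\in V}s_vx_v\ \text{ subject to }\ \sum_{v\in V}x_v\geq1,\quad x_u-x_v+\sum_{w\in N(u)\setminus\{v\}}x_w\geq0\ \ \forall v\in V,\ u\in N(v),\quad x\in\{0,1\}^V$$ has objective value less than one.
   Context: $N(u)$ denotes the neighborhood of $u$. A fort of $G$ is a non-empty set $F\subseteq V$ such that no vertex $u\in V\setminus F$ has exactly one neighbor in $F$. *)

(* Defs.v *)
From HB Require Import structures.
From mathcomp Require Import all_boot all_order all_algebra.
Set Implicit Arguments. Unset Strict Implicit. Unset Printing Implicit Defensive.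
Import Order.TTheory GRing.Theory Num.Theory.
Local Open Scope ring_scope.

(* A finite simple graph: vertex set a finType T, adjacency a symmetric,
   irreflexive boolean relation e.  N(u) = [set w | e u w]. *)
Definition simple_graph (T : finType) (e : rel T) : Prop :=
  symmetric e /\ irreflexive e.

Definition is_fort (T : finType) (e : rel T) (F : {set T}) : Prop :=
  F != set0 /\ forall u, u \notin F -> #|[set w in F | e u w]| != 1%N.

(* The integer program, with x in {0,1}^V represented as x : T -> bool
   (x_v = 1 iff x v = true). *)
Definition ip_objective (R : ringType) (T : finType) (s : T -> R) (x : T -> bool) : R :=
  \sum_(v : T) s v * (x v)%:R.

Definition ip_feasible (R : numDomainType) (T : finType) (e : rel T) (x : T -> bool) : Prop :=
  (1 <= \sum_(v : T) ((x v)%:R : R)) /\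
  (forall v u, e v u ->
     0 <= ((x u)%:R : R) - (x v)%:R + \sum_(w : T | e u w && (w != v)) ((x w)%:R : R)).

Definition ip_optimal (R : numDomainType) (T : finType) (e : rel T) (s : T -> R)
    (x : T -> bool) : Prop :=
  @ip_feasible R T e x /\
  forall y : T -> bool, @ip_feasible R T e y -> ip_objective s x <= ip_objective s y.

(* Main.v *)
Require Import Defs.
From HB Require Import structures.
From mathcomp Require Import all_boot all_order all_algebra.
Import Order.TTheory GRing.Theory Num.Theory.
Local Open Scope ring_scope.
Set Implicit Arguments.

Section Aux.
Variables (R : realFieldType) (T : finType) (e : rel T).
Hypothesis esym : symmetric e.

Lemma sum_ge1 (x : T -> bool) (P : pred T) w :
  P w -> x w -> 1 <= \sum_(v | P v) ((x v)%:R : R).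
Proof.
move=> Pw xw; rewrite (bigD1 w) //= xw lerDl.
by apply: sumr_ge0 => i _; exact: ler0n.
Qed.

Lemma sum_ex (x : T -> bool) (P : pred T) :
  0 < \sum_(v | P v) ((x v)%:R : R) -> exists w, P w && x w.
Proof.
move=> H; apply/existsP; apply: contraLR H => /existsPn H.
rewrite -leNgt big1 // => i Pi; have := H i; rewrite Pi /=.
by case: (x i).
Qed.

Lemma feas_fort (x : T -> bool) :
  @ip_feasible R T e x <-> is_fort e [set v | x v].
Proof.
split.
- case=> H1 H2; split.
  + apply/set0Pn; have [w /andP[_ xw]] : exists w, true && x w.
      by apply: sum_ex; apply: lt_le_trans H1.
    by exists w; rewrite inE.
  + move=> u; rewrite inE => xu; apply/negP => Hc; have [v Hv] := cards1P Hc.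
    have : v \in [set w in [set v | x v] | e u w] by rewrite Hv set11.
    rewrite !inE => /andP[xv euv].
    have := H2 v u; rewrite esym euv => /(_ isT).
    rewrite (negbTE xu) xv sub0r => H.
    have [w /andP[/andP[euw wv] xw]] :
      exists w, (e u w && (w != v)) && x w.
      apply: sum_ex; apply: (lt_le_trans ltr01).
      by rewrite -subr_ge0 addrC.
    have : w \in [set w in [set v | x v] | e u w] by rewrite !inE xw euw.
    by rewrite Hv inE (negbTE wv).
- case=> /set0Pn [w0 Hw0] H; split.
  + by apply: (@sum_ge1 x predT w0) => //; move: Hw0; rewrite inE.
  + move=> v u evu.
    have S0 : 0 <= \sum_(w | e u w && (w != v)) ((x w)%:R : R).
      by apply: sumr_ge0 => i _; exact: ler0n.
    case xu: (x u); case xv: (x v) => /=.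
    * by rewrite subrr add0r.
    * by rewrite subr0 addr_ge0.
    * have := H u; rewrite inE xu => /(_ isT) Hc.
      have vin : v \in [set w in [set v | x v] | e u w].
        by rewrite !inE xv -esym evu.
      have : (0 < #|[set w in [set v | x v] | e u w] :\ v|)%N.
        move: Hc; rewrite (cardsD1 v) vin /= add1n.
        by case: #|_ :\ v|.
      case/card_gt0P => w; rewrite !inE => /and3P[wv xw euw].
      rewrite sub0r; have := @sum_ge1 x (fun w => e u w && (w != v)) w.
      rewrite euw wv xw => /(_ isT isT); rewrite addrC subr_ge0.
      by [].
    * by rewrite subr0 add0r.
Qed.

Lemma obj_set (s : T -> R) (x : T -> bool) :
  ip_objective s x = \sum_(v in [set v | x v]) s v.
Proof.
rewrite /ip_objective [RHS]big_mkcond; apply: eq_bigr => v _.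
by rewrite inE; case: (x v); rewrite ?mulr1 ?mulr0.
Qed.

Definition fortb (F : {set T}) :=
  (F != set0) && [forall u, (u \notin F) ==> (#|[set w in F | e u w]| != 1%N)].

Lemma fortP F : reflect (is_fort e F) (fortb F).
Proof.
apply: (iffP andP) => [[H1 /forallP H2]|[H1 H2]]; split => //.
- by move=> u Hu; have := H2 u; rewrite Hu.
- by apply/forallP => u; apply/implyP; apply: H2.
Qed.

End Aux.

Theorem theorem5p6 (R : realFieldType) (T : finType) (e : rel T)
    (hG : simple_graph e) (hV : (0 < #|T|)%N)
    (s : T -> R) (hs : forall v, 0 <= s v <= 1) :
  (exists F : {set T}, is_fort e F /\ \sum_(v in F) s v < 1) <->
  (forall x : T -> bool, @ip_optimal R T e s x -> ip_objective s x < 1).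
Proof.
case: hG => esym _.
have setE (F : {set T}) : [set v | v \in F] = F by apply/setP => v; rewrite inE.
split.
- case=> F [HF Hs] x [_ Hopt].
  apply: le_lt_trans (Hopt (fun v => v \in F) _) _.
  + by apply/feas_fort => //; rewrite setE.
  + by rewrite obj_set setE.
- move=> H.
  have fT : fortb e [set: T].
    apply/fortP; split.
    + by apply/set0Pn; case/card_gt0P: hV => v _; exists v; rewrite inE.
    + by move=> u; rewrite inE.
  case: (@arg_minP _ R {set T} [set: T] (fortb e) (fun F => \sum_(v in F) s v) fT)
    => F0 /fortP HF0 Hmin.
  exists F0; split => //.
  have := H (fun v => v \in F0); rewrite obj_set setE; apply; split.
  + by apply/feas_fort => //; rewrite setE.
  + move=> y /(@feas_fort R T e esym) /fortP Hy.
    by rewrite !obj_set setE; apply: Hmin.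
Qed.
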